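(* Let $\alpha$ and $\beta$ be elements of order 3 in the symmetric group $S_6$ that do not belong to the same Sylow 3-subgroup. Then $\alpha\beta$ or $\alpha\beta^2$ is not an element of order 3. *)

(* Defs.v *)
From mathcomp Require Import all_boot all_fingroup all_solvable.
Set Implicit Arguments. Unset Strict Implicit. Unset Printing Implicit Defensive.

(* Main.v *)
Require Import Defs.
From mathcomp Require Import all_boot all_fingroup all_solvable.

Definition cd (s : 'S_6) : seq nat := [seq val (s i) | i <- enum 'I_6].
Definition comp (l1 l2 : seq nat) : seq nat :=
  [seq nth 0 l2 (nth 0 l1 i) | i <- iota 0 6].
Definition id6 := iota 0 6.
Definition p3 l := comp l (comp l l).
Definition cond (l1 l2 : seq nat) :=
  (p3 l2 == id6) && (p3 (comp l1 l2) == id6) && (p3 (comp l1 (comp l2 l2)) == id6)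
  ==> (comp l1 l2 == comp l2 l1).
Definition P6 := permutations id6.

Lemma big_check :
  all (fun l1 => (p3 l1 != id6) || all (fun l2 => cond l1 l2) P6) P6.
Proof. vm_compute. reflexivity. Qed.

Lemma nth_cd (s : 'S_6) (i : 'I_6) : nth 0 (cd s) i = s i.
Proof.
by rewrite /cd (nth_map i) ?nth_ord_enum // size_enum_ord.
Qed.

Lemma cd_inj : injective cd.
Proof.
move=> s t H; apply/permP => i; apply: ord_inj.
by move: (nth_cd s i) (nth_cd t i); rewrite H => <- <-.
Qed.

Lemma cd_mul s t : cd (s * t)%g = comp (cd s) (cd t).
Proof.
rewrite {1}/cd /comp -val_enum_ord -map_comp; apply: eq_map => i /=.
by rewrite !nth_cd permM.
Qed.

Lemma cd1 : cd 1%g = id6.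
Proof.
rewrite /cd /id6 -val_enum_ord; apply: eq_map => i; by rewrite perm1.
Qed.

Lemma cd_in s : cd s \in P6.
Proof.
rewrite /P6 mem_permutations /cd /id6 -val_enum_ord.
have -> : [seq val (s i) | i <- enum 'I_6] = map val (map s (enum 'I_6)).
  by rewrite map_comp.
apply: perm_map.
apply: uniq_perm; first by rewrite map_inj_uniq ?enum_uniq //; apply: perm_inj.
  by apply: enum_uniq.
move=> x; rewrite mem_enum.
apply/mapP; exists (s^-1 x)%g; first by rewrite mem_enum.
by rewrite permKV.
Qed.

Lemma cube3 (x : 'S_6) : (x ^+ 3 = 1)%g -> p3 (cd x) = id6.
Proof.
by move=> H; rewrite /p3 -!cd_mul -cd1 -H !expgS expg0 mulg1.
Qed.

Arguments cube3 {x}.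
Lemma key {a b : 'S_6} : (a ^+ 3 = 1)%g -> (b ^+ 3 = 1)%g ->
  ((a * b) ^+ 3 = 1)%g -> ((a * b ^+ 2) ^+ 3 = 1)%g -> commute a b.
Proof.
move=> Ha Hb Hab Habb.
have /allP H := big_check; have := H _ (cd_in a).
rewrite (cube3 Ha) eqxx orFb => /allP H2; have := H2 _ (cd_in b).
rewrite /cond (cube3 Hb) -!cd_mul (cube3 Hab).
rewrite (_ : (b * b)%g = (b ^+ 2)%g); last by rewrite expgS expg1.
rewrite (cube3 Habb) eqxx /= => /eqP/cd_inj.
done.
Qed.

Lemma ord3 (x : 'S_6) : #[x]%g = 3 -> (x ^+ 3 = 1)%g.
Proof. by move=> H; apply/eqP; rewrite -order_dvdn H. Qed.

Arguments ord3 {x}.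
Theorem lemma4 (alpha beta : 'S_6) :
  #[alpha]%g = 3 -> #[beta]%g = 3 ->
  ~ (exists2 P : {group 'S_6}, P \in ('Syl_3([set: 'S_6]))%g & (alpha \in P) && (beta \in P)) ->
  #[(alpha * beta)%g]%g != 3 \/ #[(alpha * beta ^+ 2)%g]%g != 3.
Proof.
move=> Ha Hb Hn.
case: (eqVneq #[(alpha * beta)%g]%g 3) => H1; last by left.
case: (eqVneq #[(alpha * beta ^+ 2)%g]%g 3) => H2; last by right.
exfalso; apply: Hn.
have cab := key (ord3 Ha) (ord3 Hb) (ord3 H1) (ord3 H2).
have pQ : pgroup 3 (<[alpha]> <*> <[beta]>)%g.
  rewrite cent_joinEl ?cents_cycle // pgroupM.
  by rewrite /pgroup -/(#[alpha]%g) -/(#[beta]%g) Ha Hb.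
have [P sylP sQP] := Sylow_superset (subsetT _) pQ.
exists P; first by rewrite inE.
apply/andP; split; apply: (subsetP sQP).
  by apply: (subsetP (joing_subl _ _)); apply: cycle_id.
by apply: (subsetP (joing_subr _ _)); apply: cycle_id.
Qed.
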